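(* Let $d\ge 2$, $\eta\in[0,1]$ and $\epsilon\in[0,1]$, and let $\mathcal{M}_\eta$ be the quantum erasure channel on $\mathcal{H}_X\cong\mathbb{C}^d$ (defined in the context). Call a quantum channel (CPTP map) $\Lambda:\mathcal{L}(\mathcal{H}_X)\to\mathcal{L}(\mathcal{H}_X)$ admissible if $$F\big(\mathcal{M}_\eta(\rho),\,\mathcal{M}_\eta(\Lambda(\rho))\big)\ \ge\ 1-\epsilon\quad\text{for every density operator }\rho\text{ on }\mathcal{H}_X .$$ Then: (i) If $\eta^2\ge 1-\epsilon$, the channel $\Lambda(\rho)=\mathrm{Tr}(\rho)\,|1\rangle\langle 1|$ (for a fixed unit vector $|1\rangle\in\mathcal{H}_X$) is admissible, and its vector kernel $\mathcal{K}(\Lambda)$ has dimension $d-1$, so that its compressibility $\dim\mathcal{K}(\Lambda)/(d-1)$ equals $1$ (the maximum possible value). (ii) If $\eta^2<1-\epsilon$, then every admissible channel $\Lambda$ has trivial vector kernel, $\mathcal{K}(\Lambda)=\{0\}$, i.e. compressibility $0$.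
   Context: Fidelity of density operators: $F(\rho,\sigma)=\big[\mathrm{Tr}\sqrt{\sqrt{\rho}\,\sigma\sqrt{\rho}}\big]^2$. Quantum erasure channel: let $\mathcal{H}_Y=\mathcal{H}_X\oplus\mathrm{span}\{|\alpha\rangle\}\cong\mathbb{C}^{d+1}$, where $|\alpha\rangle$ is a unit vector orthogonal to $\mathcal{H}_X$; $\mathcal{M}_\eta:\mathcal{L}(\mathcal{H}_X)\to\mathcal{L}(\mathcal{H}_Y)$, $\mathcal{M}_\eta(\rho)=(1-\eta)\rho+\eta\,\mathrm{Tr}(\rho)|\alpha\rangle\langle\alpha|$. Vector kernel of a linear map $\Lambda:\mathcal{L}(\mathcal{H}_X)\to\mathcal{L}(\mathcal{H}_X)$: $\mathcal{K}(\Lambda)=\{|\psi\rangle\in\mathcal{H}_X:\ \Lambda(\rho)|\psi\rangle=0\ \text{for all density operators }\rho\}$, a subspace of $\mathcal{H}_X$. The quantum compressibility of $\Lambda$ is $\dim\mathcal{K}(\Lambda)/(d-1)$. *)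

(* Defs.v *)
From Stdlib Require Import ClassicalEpsilon.
From HB Require Import structures.
From mathcomp Require Import all_boot all_order all_algebra.
Set Implicit Arguments. Unset Strict Implicit. Unset Printing Implicit Defensive.
Import Order.TTheory GRing.Theory Num.Theory.
Local Open Scope ring_scope.

Section QDefs.
Variable C : numClosedFieldType.

Definition dagmx m n (A : 'M[C]_(m, n)) : 'M[C]_(n, m) := (map_mx Num.conj A)^T.

(* positive semidefinite: <v, A v> >= 0 for all v (order of C: real & >= 0) *)
Definition psdmx n (A : 'M[C]_n) : Prop :=
  forall v : 'cV[C]_n, 0 <= (dagmx v *m A *m v) 0 0.

Definition densitymx n (rho : 'M[C]_n) : Prop := psdmx rho /\ \tr rho = 1.

(* the positive semidefinite square root (chosen; unique for psd A) *)
Definition psd_sqrt n (A : 'M[C]_n) : 'M[C]_n :=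
  epsilon (inhabits 0) (fun B : 'M[C]_n => psdmx B /\ B *m B = A).

Definition fidelity n (rho sigma : 'M[C]_n) : C :=
  (\tr (psd_sqrt (psd_sqrt rho *m sigma *m psd_sqrt rho))) ^+ 2.

(* index of the basis vector |i> (x) |a> of C^k (x) C^d *)
Definition tidx k d (i : 'I_k) (a : 'I_d) : 'I_(k * d) := mxvec_index i a.

Definition untidx k d (p : 'I_(k * d)) : 'I_k * 'I_d :=
  enum_val (cast_ord (esym (mxvec_cast k d)) p).

(* (id_k (x) Lambda) acting on operators on C^k (x) C^d, blockwise *)
Definition ampl k d (L : 'M[C]_d -> 'M[C]_d) (M : 'M[C]_(k * d)) : 'M[C]_(k * d) :=
  \matrix_(p, q)
    let: (i, a) := untidx p in
    let: (j, b) := untidx q in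
    L (\matrix_(a', b') M (tidx i a') (tidx j b')) a b.

Definition CPTP d (L : 'M[C]_d -> 'M[C]_d) : Prop :=
  [/\ linear L,
      (forall k (M : 'M[C]_(k * d)), psdmx M -> psdmx (@ampl k d L M))
    & forall X, \tr (L X) = \tr X].

(* quantum erasure channel on H_Y = H_X (+) span{alpha} = C^(d+1), where
   H_X is spanned by the first d basis vectors and alpha is the last one *)
Definition erasure d (eta : C) (rho : 'M[C]_d) : 'M[C]_(d + 1) :=
  block_mx ((1 - eta) *: rho) 0 0 ((eta * \tr rho)%:M).

Definition admissible d (eta eps : C) (L : 'M[C]_d -> 'M[C]_d) : Prop :=
  CPTP L /\
  forall rho : 'M[C]_d, densitymx rho ->
    1 - eps <= fidelity (erasure eta rho) (erasure eta (L rho)).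

Definition vker d (L : 'M[C]_d -> 'M[C]_d) (psi : 'cV[C]_d) : Prop :=
  forall rho, densitymx rho -> L rho *m psi = 0.

Definition has_dim d (S : 'cV[C]_d -> Prop) (k : nat) : Prop :=
  exists B : 'M[C]_(k, d), row_free B /\
    forall psi : 'cV[C]_d, S psi <-> (psi^T <= B)%MS.

End QDefs.

(* Main.v *)
Require Import Defs.
From Stdlib Require Import ClassicalEpsilon.
From HB Require Import structures.
From mathcomp Require Import all_boot all_order all_algebra.
From mathcomp Require Import ring.
Import Order.TTheory GRing.Theory Num.Theory.
Set Implicit Arguments. Unset Strict Implicit. Unset Printing Implicit Defensive.
Local Open Scope ring_scope.
Local Open Scope sesquilinear_scope.

Lemma dagmxE (C : numClosedFieldType) m n (A : 'M[C]_(m,n)) i j :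
  dagmx A i j = (A j i)^*.
Proof. by rewrite /dagmx !mxE. Qed.

Lemma dagmxM (C : numClosedFieldType) m n p (A : 'M[C]_(m,n)) (B : 'M[C]_(n,p)) :
  dagmx (A *m B) = dagmx B *m dagmx A.
Proof.
apply/matrixP => i j; rewrite !dagmxE !mxE rmorph_sum; apply: eq_bigr => k _.
by rewrite !dagmxE rmorphM mulrC.
Qed.

Lemma dagmxK (C : numClosedFieldType) m n (A : 'M[C]_(m,n)) : dagmx (dagmx A) = A.
Proof. by apply/matrixP => i j; rewrite !dagmxE conjCK. Qed.

Lemma dagmxD (C : numClosedFieldType) m n (A B : 'M[C]_(m,n)) :
  dagmx (A + B) = dagmx A + dagmx B.
Proof. by apply/matrixP => i j; rewrite /dagmx !mxE rmorphD. Qed.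

Lemma dagmxZ (C : numClosedFieldType) m n a (A : 'M[C]_(m,n)) :
  dagmx (a *: A) = a^* *: dagmx A.
Proof. by apply/matrixP => i j; rewrite /dagmx !mxE rmorphM. Qed.

Lemma dagmxN (C : numClosedFieldType) m n (A : 'M[C]_(m,n)) :
  dagmx (- A) = - dagmx A.
Proof. by apply/matrixP => i j; rewrite /dagmx !mxE rmorphN. Qed.

Lemma dagmx0 (C : numClosedFieldType) m n : dagmx (0 : 'M[C]_(m,n)) = 0.
Proof. by apply/matrixP => i j; rewrite /dagmx !mxE rmorph0. Qed.

Lemma dagmx_scalar (C : numClosedFieldType) n (a : C) :
  dagmx (a%:M : 'M_n) = (a^*)%:M.
Proof.
apply/matrixP => i j; rewrite /dagmx !mxE eq_sym.
by case: (i == j); rewrite ?mulr1n ?mulr0n ?rmorph0.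
Qed.

Lemma dagmx_col (C : numClosedFieldType) m1 m2 n (A : 'M[C]_(m1,n)) (B : 'M[C]_(m2,n)) :
  dagmx (col_mx A B) = row_mx (dagmx A) (dagmx B).
Proof. by rewrite /dagmx map_col_mx tr_col_mx. Qed.

Lemma dagmx_block (C : numClosedFieldType) m1 m2 n1 n2 (A : 'M[C]_(m1,n1))
  (B : 'M[C]_(m1,n2)) (D : 'M[C]_(m2,n1)) (E : 'M[C]_(m2,n2)) :
  dagmx (block_mx A B D E) = block_mx (dagmx A) (dagmx D) (dagmx B) (dagmx E).
Proof. by rewrite /dagmx map_block_mx tr_block_mx. Qed.

Definition sq (C : numClosedFieldType) n (A : 'M[C]_n) (u w : 'cV[C]_n) : C :=
  (dagmx u *m A *m w) 0 0.

Lemma sq_expand (C : numClosedFieldType) n (A : 'M[C]_n) u w c :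
  sq A (u + c *: w) (u + c *: w) =
  sq A u u + c * sq A u w + c^* * sq A w u + c^* * c * sq A w w.
Proof.
rewrite /sq dagmxD dagmxZ !mulmxDl !mulmxDr -!scalemxAl -!scalemxAr !mxE.
ring.
Qed.

Lemma sq_delta (C : numClosedFieldType) n (A : 'M[C]_n) i j :
  sq A (delta_mx i 0) (delta_mx j 0) = A i j.
Proof.
rewrite /sq; have -> : dagmx (delta_mx i 0 : 'cV[C]_n) = delta_mx 0 i.
  by apply/matrixP => a b; rewrite /dagmx !mxE rmorph_nat andbC.
by rewrite -rowE -colE !mxE.
Qed.

Lemma psd_real (C : numClosedFieldType) n (A : 'M[C]_n) v :
  psdmx A -> (sq A v v)^* = sq A v v.
Proof. by move=> H; rewrite geC0_conj //; apply: H. Qed.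

Lemma psd_herm (C : numClosedFieldType) n (A : 'M[C]_n) :
  psdmx A -> dagmx A = A.
Proof.
move=> H; apply/matrixP => i j; rewrite dagmxE.
have Ei := psd_real (delta_mx i 0) H; have Ej := psd_real (delta_mx j 0) H.
rewrite !sq_delta in Ei Ej.
have Hc c : c^* * (A i j)^* + c * (A j i)^* = c * A i j + c^* * A j i.
  have := psd_real (delta_mx i 0 + c *: delta_mx j 0) H.
  rewrite sq_expand !sq_delta => E; rewrite !rmorphD !rmorphM /= ?conjCK Ei Ej in E.
  have : c^* * (A i j)^* + c * (A j i)^* - (c * A i j + c^* * A j i) =
    (A i i + c^* * (A i j)^* + c * (A j i)^* + c * c^* * A j j)
    - (A i i + c * A i j + c^* * A j i + c^* * c * A j j) by ring.
  by rewrite E subrr => /eqP; rewrite subr_eq0 => /eqP.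
have H1 := Hc 1; have H2 := Hc 'i.
rewrite rmorph1 !mul1r in H1; rewrite conjCi in H2.
set a := A i j in H1 H2 *; set b := A j i in H1 H2 *.
have E2 : (2 : C) != 0 by rewrite pnatr_eq0.
have Eii : 'i * 'i = -1 :> C by rewrite -expr2 sqrCi.
apply: (mulfI E2).
have : 2 * b^* - 2 * a = (a^* + b^* - (a + b)) + (-'i) * (-'i * a^* + 'i * b^* - ('i * a + - 'i * b))
   - (1 + 'i * 'i) * (a^* - b^* + a - b) by ring.
rewrite H1 H2 Eii !subrr mulr0 addr0 mul0r subr0 => /eqP; rewrite subr_eq0 => /eqP.
done.
Qed.

Lemma normv_ge0 (C : numClosedFieldType) n (w : 'cV[C]_n) : 0 <= (dagmx w *m w) 0 0.
Proof.
rewrite mxE; apply: sumr_ge0 => k _; rewrite dagmxE mulrC; exact: mul_conjC_ge0.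
Qed.

Lemma normv_eq0 (C : numClosedFieldType) n (w : 'cV[C]_n) :
  (dagmx w *m w) 0 0 = 0 -> w = 0.
Proof.
rewrite mxE => /psumr_eq0P H; apply/matrixP => k l; rewrite ord1 mxE.
have Hge : forall i : 'I_n, true -> 0 <= dagmx w 0 i * w i 0.
  by move=> i _; rewrite dagmxE mulrC mul_conjC_ge0.
have := H Hge k isT; rewrite dagmxE mulrC => /eqP.
by rewrite mul_conjC_eq0 => /eqP.
Qed.

Lemma psd_kernel (C : numClosedFieldType) n (S : 'M[C]_n) (v : 'cV[C]_n) :
  psdmx S -> S *m (S *m v) = 0 -> S *m v = 0.
Proof.
move=> HS E; apply: normv_eq0.
by rewrite dagmxM (psd_herm HS) -mulmxA E mulmx0 mxE.
Qed.

Lemma eigen_trick (C : numClosedFieldType) n (S : 'M[C]_n) (v : 'cV[C]_n) (l : C) :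
  psdmx S -> 0 < l -> S *m (S *m v) = (l ^+ 2) *: v -> S *m v = l *: v.
Proof.
move=> HS lp E; set w := S *m v - l *: v.
have Ew : S *m w + l *: w = 0.
  rewrite /w mulmxBr -scalemxAr E scalerBr scalerA -expr2.
  by rewrite addrA subrK subrr.
suff : w = 0 by move/eqP; rewrite subr_eq0 => /eqP.
apply: normv_eq0.
have : (dagmx w *m (S *m w + l *: w)) 0 0 = 0 by rewrite Ew mulmx0 mxE.
rewrite mulmxDr -scalemxAr mxE [X in _ + X]mxE mulmxA => /eqP.
rewrite paddr_eq0; last 2 first.
- exact: HS.
- by rewrite mulr_ge0 ?normv_ge0 ?ltW.
by case/andP => _; rewrite mulf_eq0 (gt_eqF lp) => /eqP.
Qed.

Lemma psd_tr_ge0 (C : numClosedFieldType) n (A : 'M[C]_n) : psdmx A -> 0 <= \tr A.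
Proof. by move=> H; apply: sumr_ge0 => i _; rewrite -sq_delta; apply: H. Qed.

Lemma psd_conj (C : numClosedFieldType) m n (M : 'M[C]_m) (U : 'M[C]_(m, n)) :
  psdmx M -> psdmx (dagmx U *m M *m U).
Proof.
move=> H v; have := H (U *m v).
by rewrite dagmxM !mulmxA.
Qed.

Lemma psd_diag (C : numClosedFieldType) n (d : 'rV[C]_n) :
  (forall i, 0 <= d 0 i) -> psdmx (diag_mx d).
Proof.
move=> H v; rewrite mul_mx_diag mxE; apply: sumr_ge0 => k _; rewrite mxE dagmxE.
by rewrite mulrC mulrA mulr_ge0 // mul_conjC_ge0.
Qed.

Lemma psd_sqrt_ex (C : numClosedFieldType) n (A : 'M[C]_n) :
  psdmx A -> exists B, psdmx B /\ B *m B = A.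
Proof.
move=> HA.
have Hh : A \is hermsymmx.
  by apply/is_hermitianmxP; rewrite expr0 scale1r -{1}(psd_herm HA) /dagmx map_trmx.
have /orthomx_spectralP EA := hermitian_normalmx Hh.
have Uu := spectral_unitarymx A.
move: EA Uu; set U := spectralmx A; set D := spectral_diag A => EA Uu.
have dU : U ^t* = dagmx U by rewrite /dagmx map_trmx.
rewrite invmx_unitary // dU in EA.
have UUd : U *m dagmx U = 1%:M by rewrite -dU; apply/unitarymxP.
have UdU : dagmx U *m U = 1%:M.
  by rewrite -dU -invmx_unitary // mulVmx // unitarymx_unit.
have Dge i : 0 <= D 0 i.
  have := HA (dagmx U *m delta_mx i 0).
  rewrite dagmxM dagmxK EA !mulmxA -(mulmxA _ U) UUd mulmx1 -(mulmxA _ U) UUd mulmx1.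
  by have := sq_delta (diag_mx D) i i; rewrite /sq => ->; rewrite mxE eqxx mulr1n.
set s := \row_j sqrtC (D 0 j).
exists (dagmx U *m diag_mx s *m U); split.
  by apply: psd_conj; apply: psd_diag => i; rewrite mxE sqrtC_ge0.
rewrite EA -!mulmxA; congr (_ *m _); rewrite !mulmxA -(mulmxA _ U) UUd mulmx1.
congr (_ *m _); rewrite mulmx_diag; congr diag_mx; apply/matrixP => i j.
by rewrite !mxE ord1 -expr2 sqrtCK.
Qed.

Lemma psd_sqrt_spec (C : numClosedFieldType) n (A : 'M[C]_n) :
  psdmx A -> psdmx (psd_sqrt A) /\ psd_sqrt A *m psd_sqrt A = A.
Proof.
move=> HA; rewrite /psd_sqrt; apply: (epsilon_spec (inhabits 0) (fun B => psdmx B /\ B *m B = A)).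
exact: psd_sqrt_ex.
Qed.

Lemma sqrt_eig (C : numClosedFieldType) n (M : 'M[C]_n) (v : 'cV[C]_n) a :
  psdmx M -> M *m v = a *: v -> 0 <= a -> psd_sqrt M *m v = sqrtC a *: v.
Proof.
move=> HM Ev a0; have [HP HPP] := psd_sqrt_spec HM.
have EPP : psd_sqrt M *m (psd_sqrt M *m v) = a *: v by rewrite mulmxA HPP.
case: (eqVneq a 0) => [az|anz].
  rewrite az sqrtC0 scale0r; apply: psd_kernel => //; by rewrite EPP az scale0r.
apply: eigen_trick => //; first by rewrite sqrtC_gt0 lt_def anz.
by rewrite sqrtCK.
Qed.

Lemma psd_scalar (C : numClosedFieldType) n (a : C) : 0 <= a -> psdmx (a%:M : 'M_n).
Proof.
by move=> a0 v; rewrite mul_mx_scalar -scalemxAl mxE mulr_ge0 ?normv_ge0.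
Qed.

Lemma psd_scale (C : numClosedFieldType) n (a : C) (A : 'M_n) :
  0 <= a -> psdmx A -> psdmx (a *: A).
Proof.
by move=> a0 HA v; rewrite -scalemxAr -scalemxAl mxE mulr_ge0 //; apply: HA.
Qed.

Lemma psd_block (C : numClosedFieldType) m n (A : 'M[C]_m) (D : 'M[C]_n) :
  psdmx A -> psdmx D -> psdmx (block_mx A 0 0 D).
Proof.
move=> HA HD v; rewrite -[v]vsubmxK dagmx_col mul_row_block mul_row_col.
rewrite !mulmx0 !add0r addr0 mxE; apply: addr_ge0; [exact: HA | exact: HD].
Qed.

Lemma psd_ul (C : numClosedFieldType) m n (S : 'M[C]_(m + n)) :
  psdmx S -> psdmx (ulsubmx S).
Proof.
move=> HS v; have := HS (col_mx v 0).
rewrite -{1}[S]submxK dagmx_col dagmx0 mul_row_block mul_row_col.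
by rewrite !mulmx0 !mul0mx !addr0.
Qed.

Definition en (C : numClosedFieldType) d : 'cV[C]_(d + 1) := col_mx 0 1.

Lemma mx_ext (C : numClosedFieldType) d (X Y : 'M[C]_(d + 1)) :
  (forall w : 'cV[C]_d, X *m col_mx w 0 = Y *m col_mx w 0) -> X *m en C d = Y *m en C d -> X = Y.
Proof.
move=> Hw He.
have Hv (v : 'cV[C]_(d + 1)) : X *m v = Y *m v.
  rewrite -[v]vsubmxK.
  have -> : col_mx (usubmx v) (dsubmx v) = col_mx (usubmx v) 0 + (dsubmx v) 0 0 *: en C d.
    rewrite /en scale_col_mx scaler0 add_col_mx add0r addr0; congr col_mx.
    by rewrite [LHS]mx11_scalar scalemx1.
  by rewrite !mulmxDr -!scalemxAr Hw He.
apply/matrixP => i j; have := Hv (delta_mx j 0); rewrite -!colE => /matrixP/(_ i 0).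
by rewrite !mxE.
Qed.

Lemma erasure_block (C : numClosedFieldType) d (eta : C) (rho : 'M[C]_d) :
  \tr rho = 1 -> erasure eta rho = block_mx ((1 - eta) *: rho) 0 0 (eta%:M).
Proof. by move=> H; rewrite /erasure H mulr1. Qed.

Lemma erasure_en (C : numClosedFieldType) d (eta : C) (rho : 'M[C]_d) :
  \tr rho = 1 -> erasure eta rho *m en C d = eta *: en C d.
Proof.
move=> H; rewrite erasure_block // /en mul_block_col scale_col_mx.
by rewrite !mulmx0 !mul0mx !addr0 add0r scaler0 mulmx1 scalemx1.
Qed.

Lemma erasure_col (C : numClosedFieldType) d (eta : C) (rho : 'M[C]_d) (w : 'cV[C]_d) :
  erasure eta rho *m col_mx w 0 = col_mx ((1 - eta) *: (rho *m w)) 0.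
Proof.
by rewrite /erasure mul_block_col !mulmx0 !mul0mx !addr0 -scalemxAl.
Qed.

Lemma erasure_psd (C : numClosedFieldType) d (eta : C) (rho : 'M[C]_d) :
  0 <= eta <= 1 -> densitymx rho -> psdmx (erasure eta rho).
Proof.
case/andP => e0 e1 [Hp Ht]; rewrite erasure_block //.
apply: psd_block; last exact: psd_scalar.
by apply: psd_scale => //; rewrite subr_ge0.
Qed.

Lemma col_mx00 (C : numClosedFieldType) m n p : col_mx (0 : 'M[C]_(m,p)) (0 : 'M[C]_(n,p)) = 0.
Proof. by apply/matrixP => i j; rewrite !mxE; case: splitP => *; rewrite mxE. Qed.

Lemma psd0 (C : numClosedFieldType) n : psdmx (0 : 'M[C]_n).
Proof. by move=> v; rewrite mulmx0 mul0mx mxE. Qed.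

Lemma part2 (C : numClosedFieldType) (d : nat) (eta eps : C) :
  0 <= eta <= 1 -> eta ^+ 2 < 1 - eps ->
  forall L : 'M[C]_d -> 'M[C]_d, admissible eta eps L ->
  forall psi : 'cV[C]_d, vker L psi -> psi = 0.
Proof.
move=> Heta Hlt L [[_ _ TP] Hadm] psi Hpsi.
have /andP[e0 e1] := Heta.
case: (eqVneq psi 0) => // psinz; exfalso.
set nn := (dagmx psi *m psi) 0 0.
have nn0 : nn != 0 by apply/eqP => /normv_eq0; apply/eqP.
have nnp : 0 < nn by rewrite lt_def nn0 normv_ge0.
have Epp : dagmx psi *m psi = nn%:M by rewrite [LHS]mx11_scalar.
set rho := nn^-1 *: (psi *m dagmx psi).
have rw w : rho *m w = (nn^-1 * (dagmx psi *m w) 0 0) *: psi.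
  by rewrite /rho -scalemxAl -mulmxA {1}[dagmx psi *m w]mx11_scalar mul_mx_scalar scalerA.
have rpsi : rho *m psi = psi by rewrite rw -/nn mulVf // scale1r.
have rtr : \tr rho = 1.
  by rewrite /rho mxtraceZ mxtrace_mulC Epp mxtrace_scalar mulr1n mulVf.
have rpsd : psdmx rho.
  move=> v; rewrite /rho -scalemxAr -scalemxAl mxE; apply: mulr_ge0; first by rewrite invr_ge0 ltW.
  have -> : dagmx v *m (psi *m dagmx psi) *m v = dagmx (dagmx psi *m v) *m (dagmx psi *m v).
    by rewrite dagmxM dagmxK !mulmxA.
  exact: normv_ge0.
have rdens : densitymx rho by [].
set tau := L rho.
have tpsi : tau *m psi = 0 := Hpsi rho rdens.
have ttr : \tr tau = 1 by rewrite TP.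
set E := erasure eta rho.
have HE : psdmx E := erasure_psd Heta rdens.
have [HP HPP] := psd_sqrt_spec HE.
set P := psd_sqrt E in HP HPP *.
have P1 w : exists c, P *m col_mx w 0 = c *: col_mx psi 0.
  set k := nn^-1 * (dagmx psi *m w) 0 0.
  set w' := w - k *: psi.
  have Ew' : rho *m w' = 0 by rewrite /w' mulmxBr -scalemxAr rpsi rw subrr.
  have Pw' : P *m col_mx w' 0 = 0.
    have := @sqrt_eig _ _ E (col_mx w' 0) 0 HE; rewrite sqrtC0 scale0r; apply => //.
    by rewrite erasure_col Ew' scaler0 col_mx00.
  have Ppsi : P *m col_mx psi 0 = sqrtC (1 - eta) *: col_mx psi 0.
    apply: sqrt_eig => //; last by rewrite subr_ge0.
    by rewrite erasure_col rpsi scale_col_mx scaler0.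
  exists (k * sqrtC (1 - eta)).
  have -> : col_mx w (0 : 'cV[C]_1) = k *: col_mx psi 0 + col_mx w' 0.
    by rewrite scale_col_mx scaler0 add_col_mx addr0 /w' addrC subrK.
  by rewrite mulmxDr -scalemxAr Ppsi Pw' addr0 scalerA.
have P2 : P *m en C d = sqrtC eta *: en C d := sqrt_eig HE (erasure_en eta rtr) e0.
set sig := erasure eta tau.
have spsi : sig *m col_mx psi 0 = 0 by rewrite erasure_col tpsi scaler0 col_mx00.
have sen : sig *m en C d = eta *: en C d := erasure_en eta ttr.
have HX : P *m sig *m P = block_mx 0 0 0 ((eta ^+ 2)%:M).
  apply: mx_ext.
    move=> w; have [c Ec] := P1 w.
    rewrite -!mulmxA Ec -!scalemxAr spsi mulmx0 scaler0.
    by rewrite mul_block_col !mul0mx !mulmx0 !addr0 col_mx00.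
  rewrite -!mulmxA P2 -!scalemxAr sen -!scalemxAr P2 !scalerA.
  rewrite /en mul_block_col !mul0mx !addr0 add0r mulmx1 scale_col_mx scaler0 scalemx1.
  by congr col_mx; congr scalar_mx; rewrite -mulrA mulrCA -expr2 sqrtCK -expr2.
have HXpsd : psdmx (P *m sig *m P).
  by rewrite HX; apply: psd_block; [exact: psd0 | apply: psd_scalar; rewrite exprn_ge0].
have HS : psd_sqrt (P *m sig *m P) = block_mx 0 0 0 (eta%:M).
  apply: mx_ext.
    move=> w; rewrite (@sqrt_eig _ _ _ _ 0) //; last first.
      by rewrite HX mul_block_col ?mul0mx ?mulmx0 ?addr0 col_mx00 scale0r.
    by rewrite sqrtC0 scale0r mul_block_col ?mul0mx ?mulmx0 ?addr0 col_mx00.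
  rewrite (@sqrt_eig _ _ _ _ (eta ^+ 2)) ?exprn_ge0 // ?sqrCK //; last first.
    rewrite HX /en mul_block_col ?mul0mx ?mulmx0 ?addr0 ?add0r ?mulmx1 scale_col_mx scaler0.
    by rewrite scalemx1.
  rewrite /en mul_block_col ?mul0mx ?mulmx0 ?addr0 ?add0r ?mulmx1 scale_col_mx scaler0.
  by rewrite scalemx1.
have := Hadm rho rdens; rewrite -/E -/tau -/sig /fidelity -/P HS.
rewrite mxtrace_block mxtrace0 mxtrace_scalar mulr1n add0r => H.
by have := lt_le_trans Hlt H; rewrite ltxx.
Qed.

Lemma proj_psd (C : numClosedFieldType) d (e : 'cV[C]_d) : psdmx (e *m dagmx e).
Proof.
move=> v.
have -> : dagmx v *m (e *m dagmx e) *m v = dagmx (dagmx e *m v) *m (dagmx e *m v).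
  by rewrite dagmxM dagmxK !mulmxA.
exact: normv_ge0.
Qed.

Lemma proj_tr (C : numClosedFieldType) d (e : 'cV[C]_d) :
  dagmx e *m e = 1 -> \tr (e *m dagmx e) = 1.
Proof. by move=> H; rewrite mxtrace_mulC H mxtrace1. Qed.

Lemma part1_fid (C : numClosedFieldType) (d : nat) (eta eps : C) (e : 'cV[C]_d) :
  0 <= eta <= 1 -> 1 - eps <= eta ^+ 2 -> dagmx e *m e = 1 ->
  forall rho, densitymx rho ->
  1 - eps <= fidelity (erasure eta rho) (erasure eta (\tr rho *: (e *m dagmx e))).
Proof.
move=> Heta Hle He rho [rpsd rtr].
have /andP[e0 e1] := Heta.
rewrite rtr scale1r.
set E := erasure eta rho; set sig := erasure eta (e *m dagmx e).
have HE : psdmx E := erasure_psd Heta (conj rpsd rtr).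
have Hsig : psdmx sig := erasure_psd Heta (conj (proj_psd e) (proj_tr He)).
have [HP HPP] := psd_sqrt_spec HE.
set P := psd_sqrt E in HP HPP *.
have HX : psdmx (P *m sig *m P).
  by have := psd_conj P Hsig; rewrite (psd_herm HP).
have [HS _] := psd_sqrt_spec HX.
set S := psd_sqrt (P *m sig *m P) in HS *.
have P2 : P *m en C d = sqrtC eta *: en C d := sqrt_eig HE (erasure_en eta rtr) e0.
have sen : sig *m en C d = eta *: en C d := erasure_en eta (proj_tr He).
have Xen : P *m sig *m P *m en C d = (eta ^+ 2) *: en C d.
  rewrite -!mulmxA P2 -!scalemxAr sen -!scalemxAr P2 !scalerA.
  by congr (_ *: _); rewrite -mulrA mulrCA -expr2 sqrtCK -expr2.
have Sen : S *m en C d = eta *: en C d.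
  by rewrite (sqrt_eig HX Xen) ?exprn_ge0 // sqrCK.
have trS : eta <= \tr S.
  move: Sen; rewrite -[S]submxK /en mul_block_col ?mulmx0 ?addr0 ?add0r ?mulmx1.
  rewrite scale_col_mx scaler0 scalemx1 => /eq_col_mx [_ ->].
  rewrite mxtrace_block mxtrace_scalar mulr1n lerDr.
  by apply: psd_tr_ge0; apply: psd_ul.
apply: (le_trans Hle); rewrite /fidelity -/P -/S.
apply: lerXn2r => //.
by rewrite nnegrE (le_trans e0 trS).
Qed.

Lemma has_dim_of (C : numClosedFieldType) d (S : 'cV[C]_d -> Prop) r (B : 'M[C]_(r, d)) k :
  r = k -> row_free B -> (forall psi, S psi <-> (psi^T <= B)%MS) -> has_dim S k.
Proof. by move=> Er; subst k => HB HS; exists B. Qed.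

Lemma part1_dim (C : numClosedFieldType) (d : nat) (e : 'cV[C]_d) :
  dagmx e *m e = 1 ->
  has_dim (vker (fun rho : 'M[C]_d => \tr rho *: (e *m dagmx e))) d.-1.
Proof.
move=> He.
set K := (dagmx e)^T.
apply: (@has_dim_of _ _ _ _ (row_base (kermx K))).
- rewrite mxrank_ker mxrank_tr.
  suff -> : \rank (dagmx e) = 1%N by rewrite subn1.
  apply/eqP; rewrite eqn_leq rank_leq_row lt0n mxrank_eq0 /=.
  apply/eqP => E0; move: He; rewrite E0 mul0mx => /eqP; by rewrite eq_sym oner_eq0.
- exact: row_base_free.
move=> psi; rewrite eq_row_base sub_kermx /K -trmx_mul -trmx0 (inj_eq trmx_inj).
split.
  move=> H; have := H _ (conj (proj_psd e) (proj_tr He)).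
  rewrite (proj_tr He) scale1r => /(congr1 (mulmx (dagmx e))).
  by rewrite mulmx0 !mulmxA He mul1mx => ->.
by move/eqP => H rho _; rewrite -scalemxAl -mulmxA H mulmx0 scaler0.
Qed.

Lemma part1_lin (C : numClosedFieldType) (d : nat) (e : 'cV[C]_d) :
  linear (fun rho : 'M[C]_d => \tr rho *: (e *m dagmx e)).
Proof. by move=> a u v /=; rewrite mxtraceD mxtraceZ scalerDl scalerA. Qed.

Lemma untidxK k d (i : 'I_k) (a : 'I_d) : untidx (tidx i a) = (i, a).
Proof. by rewrite /untidx /tidx /mxvec_index cast_ordK enum_rankK. Qed.

Lemma tidxK k d (p : 'I_(k * d)) : tidx (untidx p).1 (untidx p).2 = p.
Proof. by case: (mxvec_indexP p) => i a; rewrite -/(tidx i a) untidxK. Qed.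

Lemma sum_tidx (C : numClosedFieldType) k d (F : 'I_(k * d) -> C) :
  \sum_p F p = \sum_(i < k) \sum_(a < d) F (tidx i a).
Proof.
rewrite pair_big /=.
rewrite (reindex (fun x : 'I_k * 'I_d => tidx x.1 x.2)) //=.
exists (@untidx k d) => [[i a] _ | p _]; first by rewrite untidxK.
exact: tidxK.
Qed.

Lemma sq_sum (C : numClosedFieldType) n (A : 'M[C]_n) (v : 'cV[C]_n) :
  (dagmx v *m A *m v) 0 0 = \sum_p \sum_q (v p 0)^* * A p q * v q 0.
Proof.
rewrite mxE exchange_big; apply: eq_bigr => q _; rewrite mxE big_distrl.
by apply: eq_bigr => p _; rewrite dagmxE.
Qed.

Lemma dagmx_sum (C : numClosedFieldType) m n (I : finType) (F : I -> 'M[C]_(m, n)) :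
  dagmx (\sum_i F i) = \sum_i dagmx (F i).
Proof.
apply: (big_morph (@dagmx C m n)) => [x y|]; [exact: dagmxD | exact: dagmx0].
Qed.

Lemma sum_prod3 (C : numClosedFieldType) (I J : finType) (f : I -> C) (g : J -> C) x :
  (\sum_a f a) * x * (\sum_b g b) = \sum_a \sum_b f a * x * g b.
Proof.
rewrite big_distrl big_distrl /=; apply: eq_bigr => a _; rewrite big_distrr /=.
by apply: eq_bigr.
Qed.

Lemma part1_cp (C : numClosedFieldType) d (e : 'cV[C]_d) k (M : 'M[C]_(k * d)) :
  psdmx M -> psdmx (@ampl C k d (fun rho : 'M[C]_d => \tr rho *: (e *m dagmx e)) M).
Proof.
move=> HM v.
set A := ampl _ M.
set V := fun i a => v (tidx i a) 0.
set T := fun i j => \sum_(c < d) M (tidx i c) (tidx j c).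
set w := fun i => \sum_(b < d) (e b 0)^* * V i b.
have Hampl i a j b : A (tidx i a) (tidx j b) = T i j * (e a 0 * (e b 0)^*).
  rewrite /A /ampl mxE !untidxK /= !mxE big_ord1 dagmxE /T /mxtrace.
  by congr (_ * _); apply: eq_bigr => c _; rewrite mxE.
have Hw i : (w i)^* = \sum_(a < d) e a 0 * (V i a)^*.
  by rewrite /w rmorph_sum; apply: eq_bigr => a _; rewrite rmorphM /= conjCK mulrC.
have E1 : (dagmx v *m A *m v) 0 0 = \sum_(i < k) \sum_(j < k) (w i)^* * T i j * w j.
  rewrite sq_sum sum_tidx; apply: eq_bigr => i0 _.
  under eq_bigr => x _ do rewrite sum_tidx.
  rewrite exchange_big; apply: eq_bigr => j _.
  rewrite Hw sum_prod3; apply: eq_bigr => a _.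
  apply: eq_bigr => b _.
  by rewrite Hampl /V; ring.
have E2 c : \sum_(i < k) \sum_(j < k) (w i)^* * (w j * M (tidx i c) (tidx j c)) =
    (dagmx (\sum_(i < k) w i *: (delta_mx (tidx i c) 0 : 'cV[C]_(k * d))) *m M *m
      (\sum_(i < k) w i *: (delta_mx (tidx i c) 0 : 'cV[C]_(k * d)))) 0 0.
  symmetry; rewrite dagmx_sum mulmx_suml mulmx_suml summxE; apply: eq_bigr => i _.
  rewrite mulmx_sumr summxE; apply: eq_bigr => j _.
  rewrite dagmxZ -scalemxAl -scalemxAl -scalemxAr mxE mxE.
  by have := sq_delta M (tidx i c) (tidx j c); rewrite /sq => ->.
have E3 : \sum_(i < k) \sum_(j < k) (w i)^* * T i j * w j =
    \sum_(c < d) \sum_(i < k) \sum_(j < k) (w i)^* * (w j * M (tidx i c) (tidx j c)).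
  rewrite [RHS]exchange_big; apply: eq_bigr => i _.
  rewrite [RHS]exchange_big; apply: eq_bigr => j _.
  have -> : T i j = \sum_(c < d) M (tidx i c) (tidx j c) by [].
  rewrite mulrAC big_distrr /=; apply: eq_bigr => c _; ring.
rewrite E1 E3; apply: sumr_ge0 => c _; rewrite E2; exact: HM.
Qed.

Local Close Scope sesquilinear_scope.

Theorem mainTheorem1 (C : numClosedFieldType) (d : nat) (eta eps : C) :
  (2 <= d)%N -> 0 <= eta <= 1 -> 0 <= eps <= 1 ->
  (eta ^+ 2 >= 1 - eps ->
     forall e : 'cV[C]_d, dagmx e *m e = 1 ->
       let L := fun rho : 'M[C]_d => \tr rho *: (e *m dagmx e) in
       admissible eta eps L /\ has_dim (vker L) d.-1)
  /\
  (eta ^+ 2 < 1 - eps ->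
     forall L : 'M[C]_d -> 'M[C]_d, admissible eta eps L ->
       forall psi : 'cV[C]_d, vker L psi -> psi = 0).
Proof.
move=> _ Heta _; split.
  move=> Hle e He L; split; last exact: part1_dim.
  split; last exact: part1_fid Heta Hle He.
  split.
  - exact: part1_lin.
  - by move=> k M; exact: part1_cp.
  - by move=> X; rewrite /L mxtraceZ proj_tr // mulr1.
exact: part2 Heta.
Qed.
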